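(* If $X$ is a strongly $\delta$-hyperbolic directed graph, then every strongly connected component of $X$ (viewed as a directed graph with the induced edges) is strongly $\delta$-hyperbolic.
   Context: Directed graphs may have loops and multiple edges; $d(u,v)$ is the length of a shortest directed path from $u$ to $v$ ($\infty$ if none). Strongly connected components are the equivalence classes of $x\sim y$ iff $d(x,y)<\infty$ and $d(y,x)<\infty$. Out-ball $\overrightarrow{\mathcal{B}}_r(x)=\{y : d(x,y)\le r\}$, in-ball $\overleftarrow{\mathcal{B}}_r(x)=\{y : d(y,x)\le r\}$, extended to sets by union. A path $[x_0,\dots,x_n]$ is a geodesic if $n=d(x_0,x_n)$. A directed geodesic triangle is an ordered triple $(p,q,r)$ of geodesics with the end of $p$ equal to the start of $q$ and $p\circ q$ having the same start and end as $r$; it is $\delta$-thin if every vertex of $r$ lies in $\overrightarrow{\mathcal{B}}_\delta(p)\cup\overleftarrow{\mathcal{B}}_\delta(q)$, every vertex of $p$ lies in $\overrightarrow{\mathcal{B}}_\delta(r)\cup\overleftarrow{\mathcal{B}}_\delta(q)$, and every vertex of $q$ lies in $\overrightarrow{\mathcal{B}}_\delta(p)\cup\overleftarrow{\mathcal{B}}_\delta(r)$. A directed graph is strongly $\delta$-hyperbolic if all its directed geodesic triangles are $\delta$-thin. *)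

(* Defs.v *)
From Stdlib Require Import Reals List.
Import ListNotations.
Open Scope R_scope.

Record digraph := Digraph {
  vert : Type;
  edge : Type;
  src : edge -> vert;
  tgt : edge -> vert }.

Section Defs.
Variable G : digraph.

Definition adj (x y : vert G) : Prop := exists e : edge G, src G e = x /\ tgt G e = y.

(* [x :: l] is a directed path (walk) x = x_0, x_1, ..., x_n in G; its length is length l *)
Fixpoint chain (x : vert G) (l : list (vert G)) : Prop :=
  match l with
  | nil => True
  | y :: l' => adj x y /\ chain y l'
  end.

Definition has_walk (x y : vert G) (n : nat) : Prop :=
  exists l, chain x l /\ last l x = y /\ length l = n.

Definition dist_le (x y : vert G) (r : R) : Prop :=
  exists n : nat, INR n <= r /\ has_walk x y n.

Definition reachable (x y : vert G) : Prop := exists n, has_walk x y n.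

Definition geodesic (x : vert G) (l : list (vert G)) : Prop :=
  chain x l /\ forall m, has_walk x (last l x) m -> (length l <= m)%nat.

Definition out_ball (S : list (vert G)) (r : R) (y : vert G) : Prop :=
  exists z, In z S /\ dist_le z y r.
Definition in_ball (S : list (vert G)) (r : R) (y : vert G) : Prop :=
  exists z, In z S /\ dist_le y z r.

(* The directed geodesic triangle (p, q, r) with p = [a :: lp], q = [b :: lq],
   r = [a :: lr], b = end of p, end of r = end of q, is delta-thin. *)
Definition thin_triangle (delta : R) (a : vert G) (lp : list (vert G))
    (lq : list (vert G)) (lr : list (vert G)) : Prop :=
  let p := a :: lp in
  let q := last lp a :: lq in
  let r := a :: lr in
  (forall v, In v r -> out_ball p delta v \/ in_ball q delta v) /\
  (forall v, In v p -> out_ball r delta v \/ in_ball q delta v) /\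
  (forall v, In v q -> out_ball p delta v \/ in_ball r delta v).

Definition strongly_hyperbolic (delta : R) : Prop :=
  forall (a : vert G) (lp lq lr : list (vert G)),
    geodesic a lp ->
    geodesic (last lp a) lq ->
    geodesic a lr ->
    last lr a = last lq (last lp a) ->
    thin_triangle delta a lp lq lr.

Definition scc_rel (x y : vert G) : Prop := reachable x y /\ reachable y x.

End Defs.

Definition induced (G : digraph) (P : vert G -> Prop) : digraph :=
  @Digraph {v : vert G | P v}
           {e : edge G | P (src G e) /\ P (tgt G e)}
           (fun e => exist P (src G (proj1_sig e)) (proj1 (proj2_sig e)))
           (fun e => exist P (tgt G (proj1_sig e)) (proj2 (proj2_sig e))).

Definition scc_graph (G : digraph) (x : vert G) : digraph :=
  induced G (scc_rel G x).

(* Main.v *)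
Require Import Defs.
From Stdlib Require Import Reals List ProofIrrelevance.
Import ListNotations.

Lemma last_cons' {A : Type} (y x : A) l : last (y :: l) x = last l y.
Proof.
  destruct l as [|v l]; [reflexivity|].
  change (last (v :: l) x = last (v :: l) y).
  revert v; induction l as [|w l IH]; intros v; [reflexivity|].
  change (last (w :: l) x = last (w :: l) y). apply IH.
Qed.

Section Aux.
Variable G : digraph.

Lemma chain_app (x : vert G) l1 l2 :
  chain G x l1 -> chain G (last l1 x) l2 -> chain G x (l1 ++ l2).
Proof.
  revert x; induction l1 as [|y l1 IH]; intros x H1 H2; simpl in *; auto.
  destruct H1 as [Ha Hc]; split; auto. apply IH; auto. rewrite <- last_cons' with (x := x); auto.
Qed.

Lemma last_app' (x : vert G) l1 l2 : last (l1 ++ l2) x = last l2 (last l1 x).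
Proof.
  revert x; induction l1 as [|y l1 IH]; intros x; auto.
  change ((y :: l1) ++ l2) with (y :: (l1 ++ l2)).
  rewrite (last_cons' y x (l1 ++ l2)), (last_cons' y x l1). apply IH.
Qed.

Lemma reach_iff (u v : vert G) : reachable G u v <-> exists l, chain G u l /\ last l u = v.
Proof.
  split.
  - intros [n [l [H1 [H2 _]]]]; eauto.
  - intros [l [H1 H2]]. exists (length l), l; auto.
Qed.

Lemma reach_trans (u v w : vert G) : reachable G u v -> reachable G v w -> reachable G u w.
Proof.
  rewrite !reach_iff. intros [l1 [A1 B1]] [l2 [A2 B2]]. exists (l1 ++ l2). split.
  - apply chain_app; subst; auto.
  - rewrite last_app'; subst; auto.
Qed.

Lemma reach_chain (u : vert G) l : chain G u l -> reachable G u (last l u).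
Proof. intros H. apply reach_iff. eauto. Qed.

Lemma reach_adj (u v : vert G) : adj G u v -> reachable G u v.
Proof. intros H. apply reach_iff. exists [v]; simpl; auto. Qed.

Variable x : vert G.
Let H := scc_graph G x.

Lemma val_inj (u v : vert H) : proj1_sig u = proj1_sig v -> u = v.
Proof.
  destruct u as [u pu], v as [v pv]; simpl; intros E; subst. f_equal. apply proof_irrelevance.
Qed.

Lemma adj_down (u v : vert H) : adj H u v -> adj G (proj1_sig u) (proj1_sig v).
Proof.
  intros [e [Hs Ht]]. exists (proj1_sig e). subst. simpl. auto.
Qed.

Lemma adj_up (u v : vert H) : adj G (proj1_sig u) (proj1_sig v) -> adj H u v.
Proof.
  destruct u as [u pu], v as [v pv]; simpl. intros [e [Hs Ht]]. subst.
  exists (exist (fun e => scc_rel G x (src G e) /\ scc_rel G x (tgt G e)) e (conj pu pv)).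
  split; apply val_inj; reflexivity.
Qed.

Lemma chain_down (u : vert H) l : chain H u l -> chain G (proj1_sig u) (map (@proj1_sig _ _) l).
Proof.
  revert u; induction l as [|v l IH]; intros u Hc; simpl in *; auto.
  destruct Hc; split; auto. apply adj_down; auto.
Qed.

Lemma map_last' (u : vert H) l : last (map (@proj1_sig _ _) l) (proj1_sig u) = proj1_sig (last l u).
Proof.
  revert u; induction l as [|v l IH]; intros u; auto.
  change (map (@proj1_sig _ _) (v :: l)) with (proj1_sig v :: map (@proj1_sig _ _) l).
  rewrite (last_cons' _ _ (map _ l)), (last_cons' v u l). apply IH.
Qed.

Lemma chain_up l : forall (u : vert H), chain G (proj1_sig u) l ->
  reachable G (last l (proj1_sig u)) x ->
  exists l', map (@proj1_sig _ _) l' = l /\ chain H u l'.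
Proof.
  induction l as [|y l IH]; intros u Hc Hr.
  - exists []; simpl; auto.
  - destruct Hc as [Ha Hc]. rewrite last_cons' in Hr.
    assert (Py : scc_rel G x y).
    { split.
      - apply reach_trans with (proj1_sig u). apply (proj1 (proj2_sig u)). apply reach_adj; auto.
      - apply reach_trans with (last l y); auto. apply reach_chain; auto. }
    set (v := exist (scc_rel G x) y Py : vert H).
    destruct (IH v Hc Hr) as [l' [E C]].
    exists (v :: l'). simpl. rewrite E. split; auto. split; auto. apply adj_up. exact Ha.
Qed.

Lemma walk_down (u w : vert H) n : has_walk H u w n -> has_walk G (proj1_sig u) (proj1_sig w) n.
Proof.
  intros [l [C [L N]]]. exists (map (@proj1_sig _ _) l). split; [apply chain_down; auto|].
  split; [rewrite map_last'; subst; auto|]. rewrite length_map; auto.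
Qed.

Lemma walk_up (u w : vert H) n : has_walk G (proj1_sig u) (proj1_sig w) n -> has_walk H u w n.
Proof.
  intros [l [C [L N]]].
  destruct (chain_up l u C) as [l' [E C']].
  { rewrite L. apply (proj2 (proj2_sig w)). }
  exists l'. split; auto. split.
  - apply val_inj. rewrite <- map_last', E; auto.
  - rewrite <- N, <- E, length_map; auto.
Qed.

Lemma geo_down (u : vert H) l : geodesic H u l -> geodesic G (proj1_sig u) (map (@proj1_sig _ _) l).
Proof.
  intros [C M]. split; [apply chain_down; auto|].
  intros m W. rewrite map_last' in W. apply walk_up in W. rewrite length_map. auto.
Qed.

Lemma dist_up (u w : vert H) r : dist_le G (proj1_sig u) (proj1_sig w) r -> dist_le H u w r.
Proof. intros [n [A B]]. exists n; split; auto. apply walk_up; auto. Qed.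

Lemma out_up (S : list (vert H)) r y : out_ball G (map (@proj1_sig _ _) S) r (proj1_sig y) -> out_ball H S r y.
Proof.
  intros [z [I D]]. apply in_map_iff in I. destruct I as [z' [E I]]. subst.
  exists z'; split; auto. apply dist_up; auto.
Qed.

Lemma in_up (S : list (vert H)) r y : in_ball G (map (@proj1_sig _ _) S) r (proj1_sig y) -> in_ball H S r y.
Proof.
  intros [z [I D]]. apply in_map_iff in I. destruct I as [z' [E I]]. subst.
  exists z'; split; auto. apply dist_up; auto.
Qed.

End Aux.

Theorem proposition2p5 (G : digraph) (delta : R) :
  strongly_hyperbolic G delta ->
  forall x : vert G, strongly_hyperbolic (scc_graph G x) delta.
Proof.
  intros Hyp x a lp lq lr Gp Gq Gr E.
  pose proof (geo_down G x a lp Gp) as Gp'.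
  pose proof (geo_down G x _ lq Gq) as Gq'. rewrite <- map_last' in Gq'.
  pose proof (geo_down G x a lr Gr) as Gr'.
  assert (E' : last (map (@proj1_sig _ _) lr) (proj1_sig a) =
     last (map (@proj1_sig _ _) lq) (last (map (@proj1_sig _ _) lp) (proj1_sig a)))
    by (rewrite !map_last'; f_equal; exact E).
  pose proof (Hyp _ _ _ _ Gp' Gq' Gr' E') as T.
  unfold thin_triangle in *. simpl in T. rewrite map_last' in T.
  destruct T as [T1 [T2 T3]].
  change (proj1_sig a :: map (@proj1_sig _ _) lp) with (map (@proj1_sig _ _) (a :: lp)) in *.
  change (proj1_sig a :: map (@proj1_sig _ _) lr) with (map (@proj1_sig _ _) (a :: lr)) in *.
  change (proj1_sig (last lp a) :: map (@proj1_sig _ _) lq) with (map (@proj1_sig _ _) (last lp a :: lq)) in *.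
  repeat split; intros v I.
  - destruct (T1 (proj1_sig v) (in_map _ _ _ I)); [left; apply out_up | right; apply in_up]; auto.
  - destruct (T2 (proj1_sig v) (in_map _ _ _ I)); [left; apply out_up | right; apply in_up]; auto.
  - destruct (T3 (proj1_sig v) (in_map _ _ _ I)); [left; apply out_up | right; apply in_up]; auto.
Qed.
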